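(* The run-length encoding of $(a(n))_{n\ge 0}$ is the sequence $1,\,2-\mathbf f[0],\,2-\mathbf f[1],\,2-\mathbf f[2],\,\ldots$ (OEIS A001468).
   Context: Let $(F_n)_{n\ge 0}$ be the Fibonacci numbers: $F_0=0$, $F_1=1$, $F_n=F_{n-1}+F_{n-2}$ for $n\ge 2$. Define $(a(n))_{n\ge 0}$ (OEIS A105774) by $a(0)=0$, $a(1)=1$, and for $n\ge 2$, $a(n)=F_{j+1}-a(n-F_j)$, where $j\ge 2$ is the unique index with $F_j<n\le F_{j+1}$. The run-length encoding of a sequence is the sequence of lengths of its successive maximal blocks of consecutive equal terms. $\mathbf f=\mathbf f[0]\mathbf f[1]\mathbf f[2]\cdots=01001010\cdots$ is the infinite Fibonacci word, the fixed point of the morphism $0\mapsto 01$, $1\mapsto 0$. *)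

(* Defs.v *)
From mathcomp Require Import all_boot all_order all_algebra.
Set Implicit Arguments. Unset Strict Implicit. Unset Printing Implicit Defensive.
Import GRing.Theory Num.Theory.
Local Open Scope ring_scope.

Fixpoint fib (n : nat) : nat :=
  match n with
  | 0 => 0
  | 1 => 1
  | (m.+1 as p).+1 => (fib p + fib m)%N
  end.

(* The unique index j >= 2 with F_j < n <= F_{j+1} (for n >= 2);
   such a j is < n+2, so searching in [0, n+2) suffices. *)
Definition fibidx (n : nat) : nat :=
  find (fun j => (1 < j) && (fib j < n <= fib j.+1))%N (iota 0 n.+2).

(* a(0)=0, a(1)=1, a(n) = F_{j+1} - a(n - F_j) for n >= 2  (OEIS A105774).
   Values are taken in int so that the subtraction is genuine. [fuel]
   only guarantees termination; fuel n.+1 is enough for argument n. *)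
Fixpoint a_fuel (fuel n : nat) : int :=
  match fuel with
  | 0 => 0
  | fuel'.+1 =>
      if (n <= 1)%N then (n%:Z)
      else (fib (fibidx n).+1)%:Z - a_fuel fuel' (n - fib (fibidx n))%N
  end.

Definition a105774 (n : nat) : int := a_fuel n.+1 n.

Definition fibmorph (w : seq nat) : seq nat :=
  flatten (map (fun c => if c == 0%N then [:: 0%N; 1%N] else [:: 0%N]) w).

(* f[k]: the k-th letter of the infinite Fibonacci word, the fixed point of
   fibmorph; iter k.+1 fibmorph [::0] is a prefix of it of length >= k+1. *)
Definition fibword (k : nat) : nat := nth 0%N (iter k.+1 fibmorph [:: 0%N]) k.

(* r is the run-length encoding of the sequence u : nat -> T:
   with block starts s k = r 0 + ... + r (k-1), every r k is positive,
   u is constant on each block [s k, s (k+1)) and changes value at each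
   block boundary (so the blocks are the maximal constant blocks). *)
Definition is_rle (T : eqType) (u : nat -> T) (r : nat -> nat) : Prop :=
  let s := fun k => (\sum_(i < k) r i)%N in
  (forall k, (0 < r k)%N) /\
  (forall k m, (s k <= m)%N -> (m.+1 < s k.+1)%N -> u m.+1 = u m) /\
  (forall k, u (s k.+1).-1 != u (s k.+1)).

(* Main.v *)
Require Import Defs.
From mathcomp Require Import all_boot all_order all_algebra.
From mathcomp Require Import zify.
Set Implicit Arguments. Unset Strict Implicit. Unset Printing Implicit Defensive.
Import Order.TTheory GRing.Theory Num.Theory.

Lemma fibSS n : fib n.+2 = (fib n.+1 + fib n)%N. Proof. by []. Qed.

Lemma fib_le1 n : (fib n <= fib n.+1)%N.
Proof. case: n => [|n] //; rewrite fibSS; lia. Qed.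

Lemma fib_mono m n : (m <= n)%N -> (fib m <= fib n)%N.
Proof.
move=> /subnK <-; elim: (n - m)%N => [|d IH] //.
by rewrite addSn; apply: leq_trans IH (fib_le1 _).
Qed.

Lemma fib_pos n : (0 < n)%N -> (0 < fib n)%N.
Proof.
case: n => // n _; elim: n => [|n IH] //; rewrite fibSS; lia.
Qed.

Lemma fib_ge n : (n.+1 <= fib n.+2)%N.
Proof.
elim: n => [|n IH] //; rewrite fibSS.
have := fib_pos (ltn0Sn n); lia.
Qed.

Lemma fib_exists n : (2 <= n)%N -> exists j, [/\ (2 <= j)%N, (fib j < n)%N & (n <= fib j.+1)%N].
Proof.
elim: n => [|n IH] //; case: (ltnP n 2) => Hn.
  move=> H2; have -> : n = 1%N by lia. by exists 2%N.
move=> _; have [j [Hj1 Hj2 Hj3]] := IH Hn.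
case: (ltnP n (fib j.+1)) => Hc.
  by exists j; split => //; lia.
exists j.+1; split => //; first lia.
rewrite fibSS; have := fib_pos (ltn0Sn j.-1); have -> : j.-1.+1 = j by lia.
lia.
Qed.

Lemma fib_uniq n i j : (1 < i)%N -> (fib i < n <= fib i.+1)%N ->
  (1 < j)%N -> (fib j < n <= fib j.+1)%N -> i = j.
Proof.
move=> _ /andP[H1 H2] _ /andP[H3 H4].
case: (ltngtP i j) => // Hij.
  have := fib_mono Hij; lia.
have := fib_mono Hij; lia.
Qed.

Lemma fibidx_spec n j : (2 <= j)%N -> (fib j < n)%N -> (n <= fib j.+1)%N ->
  fibidx n = j.
Proof.
move=> Hj H1 H2.
have Hjn : (j < n.+2)%N.
  have := fib_ge j.-2; have -> : j.-2.+2 = j by lia. lia.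
rewrite /fibidx -(subnKC (ltnW Hjn)) iotaD find_cat.
have -> : has (fun j0 => (1 < j0)%N && (fib j0 < n <= fib j0.+1)%N) (iota 0 j) = false.
  apply/hasPn => i; rewrite mem_iota add0n => /andP[_ Hi].
  apply/negP => /andP[Hi1 Hi2]; have := fib_uniq Hi1 Hi2 Hj (introT andP (conj H1 H2)).
  lia.
rewrite size_iota add0n.
have -> : (n.+2 - j = (n.+2 - j).-1.+1)%N by lia.
rewrite /= Hj H1 H2 /=; lia.
Qed.

Definition g (c : nat) : seq nat := if c == 0%N then [:: 0%N; 1%N] else [:: 0%N].

Lemma fm_cons c w : fibmorph (c :: w) = g c ++ fibmorph w.
Proof. by []. Qed.

Lemma fm_cat u v : fibmorph (u ++ v) = fibmorph u ++ fibmorph v.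
Proof. by rewrite /fibmorph map_cat flatten_cat. Qed.

Definition W N := iter N fibmorph [:: 0%N].

Lemma W_S N : W N.+1 = fibmorph (W N). Proof. by []. Qed.

Lemma W_SS N : W N.+2 = W N.+1 ++ W N.
Proof.
elim: N => [|N IH] //.
by rewrite [LHS]W_S [in LHS]IH fm_cat.
Qed.

Lemma size_W N : size (W N) = fib N.+2.
Proof.
elim/ltn_ind: N => [[|[|N]]] IH //.
by rewrite W_SS size_cat !IH // fibSS.
Qed.

Lemma W_prefix1 N : exists v, W N.+1 = W N ++ v.
Proof.
case: N => [|N]; first by exists [:: 1%N].
by exists (W N); rewrite W_SS.
Qed.

Lemma W_prefix N M : exists v, W (M + N) = W N ++ v.
Proof.
elim: M => [|M [v IH]]; first by exists [::]; rewrite cats0.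
have [u Hu] := W_prefix1 (M + N).
by exists (v ++ u); rewrite addSn Hu IH catA.
Qed.

Lemma nth_W_le N M i : (N <= M)%N -> (i < size (W N))%N -> nth 0%N (W M) i = nth 0%N (W N) i.
Proof.
move=> /subnK <- Hi; have [v ->] := W_prefix N (M - N).
by rewrite nth_cat Hi.
Qed.

Lemma size_W_ge N : (N < size (W N))%N.
Proof. by rewrite size_W; apply: fib_ge. Qed.

Lemma nth_W N i : (i < size (W N))%N -> nth 0%N (W N) i = fibword i.
Proof.
move=> Hi; rewrite /fibword -/(W i.+1).
case: (leqP N i.+1) => H.
  by rewrite (nth_W_le H Hi).
by rewrite (nth_W_le (ltnW H) (ltnW (size_W_ge i.+1))).
Qed.

Lemma fibword_period j t : (3 <= j)%N -> (t < fib j.-1)%N -> fibword (fib j + t) = fibword t.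
Proof.
move=> Hj Ht.
have E : j = (j - 3).+3 by lia.
set N := (j - 3)%N in E.
have HN : (t < size (W N))%N by rewrite size_W; move: Ht; rewrite E.
have HS : size (W N.+1) = fib j by rewrite size_W E.
rewrite -(nth_W HN) -(nth_W (N := N.+2)); last first.
  by rewrite size_W fibSS -size_W HS -size_W; lia.
by rewrite W_SS nth_cat HS ltnNge leq_addr /= addKn.
Qed.

Lemma fm_binary w : all (fun c => c <= 1)%N (fibmorph w).
Proof. by elim: w => [|c w IH] //; rewrite fm_cons all_cat IH andbT /g; case: ifP. Qed.

Lemma fibword_le1 i : (fibword i <= 1)%N.
Proof.
rewrite /fibword iterS.
case: (ltnP i (size (fibmorph (iter i fibmorph [:: 0%N])))) => H.
  by move: (fm_binary (iter i fibmorph [:: 0%N])) => /all_nthP; apply.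
by rewrite nth_default.
Qed.

Lemma take_fm_size w j : (j <= size w)%N ->
  size (fibmorph (take j w)) = (\sum_(i < j) (if nth 0%N w i == 0%N then 2 else 1))%N.
Proof.
elim: j => [|j IH] Hj; first by rewrite take0 big_ord0.
rewrite (take_nth 0%N) // -cats1 fm_cat size_cat IH ?(ltnW Hj) // big_ord_recr /=.
by rewrite fm_cons cats0 /g; case: ifP.
Qed.

Lemma fm_pos w j : (j < size w)%N ->
  [/\ (size (fibmorph (take j w)) < size (fibmorph w))%N,
      nth 0%N (fibmorph w) (size (fibmorph (take j w))) = 0%N &
      (nth 0%N w j = 0%N -> nth 0%N (fibmorph w) (size (fibmorph (take j w))).+1 = 1%N)].
Proof.
move=> Hj.
have Hw : fibmorph w = fibmorph (take j w) ++ g (nth 0%N w j) ++ fibmorph (drop j.+1 w).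
  by rewrite -{1}(cat_take_drop j w) fm_cat (drop_nth 0%N) // fm_cons.
rewrite Hw size_cat !nth_cat ltnn subnn.
have -> : ((size (fibmorph (take j w))).+1 < size (fibmorph (take j w)))%N = false by lia.
rewrite subSnn.
rewrite /g; case: ifP => H /=; split => //; try lia; by move=> E; rewrite E in H.
Qed.

Section P2.
Local Open Scope ring_scope.

Lemma fibidx_ge n : (2 <= n)%N ->
  [/\ (2 <= fibidx n)%N, (fib (fibidx n) < n)%N & (n <= fib (fibidx n).+1)%N].
Proof.
move=> Hn; have [j [H1 H2 H3]] := fib_exists Hn.
by rewrite (fibidx_spec H1 H2 H3).
Qed.

Lemma a_fuel_S f n : a_fuel f.+1 n =
  if (n <= 1)%N then n%:Z else (fib (fibidx n).+1)%:Z - a_fuel f (n - fib (fibidx n))%N.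
Proof. by []. Qed.

Lemma a_fuel_indep f g n : (n < f)%N -> (n < g)%N -> a_fuel f n = a_fuel g n.
Proof.
elim: f g n => [|f IH] [|g] n // Hf Hg; rewrite !a_fuel_S.
case: ifP => // Hn.
have [H1 H2 H3] := fibidx_ge (ltac:(lia) : (2 <= n)%N).
have := fib_pos (ltnW H1).
move=> Hp. congr (_ - _); apply: IH; lia.
Qed.

Lemma a_rec n j : (2 <= j)%N -> (fib j < n)%N -> (n <= fib j.+1)%N ->
  a105774 n = (fib j.+1)%:Z - a105774 (n - fib j)%N.
Proof.
move=> Hj H1 H2.
have Hn : (2 <= n)%N.
  have := fib_mono Hj; rewrite /=; lia.
rewrite /a105774 [in LHS]a_fuel_S; have -> : (n <= 1)%N = false by lia.
rewrite (fibidx_spec Hj H1 H2).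
have := fib_pos (ltnW Hj) => Hp.
congr (_ - _); apply: a_fuel_indep; lia.
Qed.

Lemma a_small n : (n <= 1)%N -> a105774 n = n%:Z.
Proof. by case: n => [|[|]]. Qed.

Lemma a_bounds n : (0 <= a105774 n)%R /\ forall k, (n <= fib k)%N -> (a105774 n <= (fib k)%:Z)%R.
Proof.
elim/ltn_ind: n => n IH.
case: (leqP n 1) => Hn.
  rewrite a_small //; split => // k Hk; rewrite lez_nat; lia.
have [H1 H2 H3] := fibidx_ge Hn.
set j := fibidx n in H1 H2 H3 *.
rewrite (a_rec H1 H2 H3).
have Hp := fib_pos (ltnW H1).
have [IH1 IH2] := IH (n - fib j)%N ltac:(lia).
have Ht : (n - fib j <= fib j.-1)%N.
  have : fib j.+1 = (fib j + fib j.-1)%N by rewrite -[j]prednK ?fibSS //; lia.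
  lia.
have := IH2 _ Ht => Hb.
have Hf : (fib j.-1 <= fib j.+1)%N by apply: fib_mono; lia.
split; first lia.
move=> k Hk.
have Hjk : (j.+1 <= k)%N.
  case: (leqP j.+1 k) => // Hc. have := fib_mono (Hc : (k <= j)%N). lia.
have := fib_mono Hjk; lia.
Qed.

End P2.

Section P4.
Local Open Scope ring_scope.

Lemma keyA m : (a105774 m.+1 == a105774 m) = (fibword m == 1%N).
Proof.
elim/ltn_ind: m => m IH.
case: m IH => [|[|[|m]]] IH; [by vm_compute|by vm_compute|by vm_compute|].
set n := m.+3 in IH *.
have [j [Hj H1 H2]] := fib_exists (ltac:(lia) : (2 <= n.+1)%N).
have Hfj : fib j.+1 = (fib j + fib j.-1)%N by rewrite -[j]prednK ?fibSS //; lia.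
case: (ltnP (fib j) n) => Hc.
  have Hj3 : (3 <= j)%N.
    case: j Hj H1 H2 Hfj Hc => [|[|[|j]]] //= *; lia.
  rewrite (a_rec Hj H1 H2) (a_rec Hj Hc (ltnW H2)).
  have -> : (n.+1 - fib j = (n - fib j).+1)%N by lia.
  have Ht : (n - fib j < n)%N by have := fib_pos (ltnW Hj); lia.
  have := IH _ Ht.
  have -> : n = (fib j + (n - fib j))%N by lia.
  rewrite fibword_period //; last by lia.
  rewrite addKn => <-.
  by apply/idP/idP => /eqP H; apply/eqP; lia.
have Em : n = fib j by lia.
have Hj4 : (4 <= j)%N.
  case: j Hj H1 H2 Hfj Hc Em => [|[|[|[|j]]]] //= *; lia.
have Hf0 : fibword n = 0%N.
  rewrite Em -[fib j]addn0 fibword_period //; first lia.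
  by apply: fib_pos; lia.
rewrite Hf0 /=.
rewrite (a_rec Hj H1 H2).
have -> : (n.+1 - fib j = 1)%N by lia.
have [_ Hb] := a_bounds n.
have := Hb j (ltac:(lia)).
have Hf3 : (2 <= fib j.-1)%N by exact: (fib_mono (ltac:(lia) : (3 <= j.-1)%N)).
rewrite (@a_small 1%N) // Hfj => Hbn.
have -> : (0%N == 1%N) = false by [].
apply/eqP; lia.
Qed.

End P4.

Definition rr (k : nat) : nat := if k is k'.+1 then (2 - fibword k')%N else 1%N.

Lemma s_size N j : (j <= size (W N))%N ->
  (\sum_(i < j.+1) rr i)%N = (size (fibmorph (take j (W N)))).+1.
Proof.
move=> Hj; rewrite big_ord_recl /= take_fm_size // add1n; congr S.
apply: eq_bigr => i _; rewrite /bump /= nth_W; last by apply: leq_trans Hj.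
have := fibword_le1 i; case: (fibword i) => [|[|]] //.
Qed.

Theorem theorem19 :
  is_rle a105774 (fun k => if k is k'.+1 then (2 - fibword k')%N else 1%N).
Proof.
rewrite -/rr /is_rle; split; [|split].
- case=> [|k] //=. have := fibword_le1 k; lia.
- move=> [|k] m.
    by rewrite big_ord_recr big_ord0 /= => _; lia.
  have Hk : (k <= size (W k.+2))%N by have := size_W_ge k.+2; lia.
  rewrite (big_ord_recr k.+1) /= (s_size Hk) => H1 H2.
  have Hf : fibword k = 0%N by have := fibword_le1 k; lia.
  have Hm : m = (size (fibmorph (take k (W k.+2)))).+1 by lia.
  have Hk' : (k < size (W k.+2))%N by have := size_W_ge k.+2; lia.
  have [_ _ P3] := fm_pos Hk'.
  have := P3 (ltac:(rewrite nth_W //)).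
  rewrite -Hm -W_S => Hn.
  have Hs : (m < size (W k.+3))%N.
    case: (ltnP m (size (W k.+3))) => // Hc; by rewrite nth_default in Hn.
  rewrite nth_W // in Hn.
  by apply/eqP; rewrite keyA Hn.
- move=> k.
  have Hk' : (k < size (W k.+1))%N by have := size_W_ge k.+1; lia.
  rewrite (s_size (ltnW Hk')) /=.
  have [P1 P2 _] := fm_pos Hk'.
  rewrite -W_S in P1 P2; rewrite nth_W // in P2.
  by rewrite eq_sym keyA P2.
Qed.
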